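(* Let $A\in\mathbb{R}^{n\times n}$, $B\in\mathbb{R}^n$ with $(A,B)$ controllable, $n\ge2$, and let $\mathrm{an}_k\in\mathbb{R}^{(n-k)\times(n-k+1)}$, $k=1,\dots,n-1$, be full row rank matrices with $\mathrm{an}_kB_{k-1}=0$, where $B_0=B$ and $B_k=\mathrm{an}_k\cdots\mathrm{an}_1A^kB$. Put $A_{t,i}=\mathrm{an}_i\cdots\mathrm{an}_1A^i$ ($i=1,\dots,n-1$). Let $\Phi(s)=s^n+p_1s^{n-1}+\dots+p_{n-1}s+p_n$ be a real polynomial and define $$K_0=p_nI_n,\qquad K_i=\mathrm{an}_iK_{i-1}+p_{n-i}A_{t,i}\quad(i=1,\dots,n-1),\qquad K_n=K_{n-1}+A_{t,n-1}A .$$ Then $B_{n-1}=A_{t,n-1}B\neq0$ and the row vector $K=\frac{1}{B_{n-1}}K_n$ satisfies $\det(sI-A+BK)=\Phi(s)$. *)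

(* Defs.v *)
From HB Require Import structures.
From mathcomp Require Import all_boot all_order all_algebra.
From mathcomp Require Import reals.
Set Implicit Arguments. Unset Strict Implicit. Unset Printing Implicit Defensive.
Import Order.TTheory GRing.Theory Num.Theory.
Local Open Scope ring_scope.

Definition ctrb_mx (R : nzRingType) (n : nat) (A : 'M[R]_n) (B : 'cV[R]_n) : 'M[R]_n :=
  \matrix_(i < n, j < n) (A ^+ j *m B) i 0.

Definition controllable (R : fieldType) (n : nat) (A : 'M[R]_n) (B : 'cV[R]_n) : Prop :=
  \rank (ctrb_mx A B) = n.

(* Convention: the paper's an_k (k = 1..n-1), of size (n-k) x (n-k+1),
   is [an (k-1)] here, of size (n - k) x (n - (k-1)). *)

Fixpoint anprod (R : nzRingType) (n : nat)
  (an : forall k : nat, 'M[R]_(n - k.+1, n - k)) (i : nat) : 'M[R]_(n - i, n) :=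
  match i return 'M[R]_(n - i, n) with
  | 0 => castmx (esym (subn0 n), erefl n) (1%:M : 'M[R]_n)
  | i'.+1 => an i' *m anprod an i'
  end.

Definition At (R : nzRingType) (n : nat) (A : 'M[R]_n)
  (an : forall k : nat, 'M[R]_(n - k.+1, n - k)) (i : nat) : 'M[R]_(n - i, n) :=
  anprod an i *m A ^+ i.

Definition Bk (R : nzRingType) (n : nat) (A : 'M[R]_n) (B : 'cV[R]_n)
  (an : forall k : nat, 'M[R]_(n - k.+1, n - k)) (k : nat) : 'M[R]_(n - k, 1) :=
  anprod an k *m (A ^+ k *m B).

(* K_0 = p_n I_n, K_i = an_i K_{i-1} + p_{n-i} A_{t,i}, where
   Phi = s^n + p_1 s^(n-1) + ... + p_n, i.e. p_j = Phi`_(n-j), so p_{n-i} = Phi`_i. *)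
Fixpoint Kseq (R : nzRingType) (n : nat) (A : 'M[R]_n)
  (an : forall k : nat, 'M[R]_(n - k.+1, n - k)) (Phi : {poly R}) (i : nat)
  : 'M[R]_(n - i, n) :=
  match i return 'M[R]_(n - i, n) with
  | 0 => castmx (esym (subn0 n), erefl n) ((Phi`_0)%:M : 'M[R]_n)
  | i'.+1 => an i' *m Kseq A an Phi i' + Phi`_(i'.+1) *: At A an i'.+1
  end.

Lemma last_rows_eq1 (m : nat) : (m.+2 - m.+1 = 1)%N.
Proof. exact: subSnn. Qed.

Definition Blast (R : nzRingType) (m : nat) (A : 'M[R]_m.+2) (B : 'cV[R]_m.+2)
  (an : forall k : nat, 'M[R]_(m.+2 - k.+1, m.+2 - k)) : R :=
  (castmx (last_rows_eq1 m, erefl 1%N) (Bk A B an m.+1)) 0 0.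

Definition Kn (R : nzRingType) (m : nat) (A : 'M[R]_m.+2)
  (an : forall k : nat, 'M[R]_(m.+2 - k.+1, m.+2 - k)) (Phi : {poly R}) : 'rV[R]_m.+2 :=
  castmx (last_rows_eq1 m, erefl m.+2) (Kseq A an Phi m.+1 + At A an m.+1 *m A).

Definition Kgain (R : fieldType) (m : nat) (A : 'M[R]_m.+2) (B : 'cV[R]_m.+2)
  (an : forall k : nat, 'M[R]_(m.+2 - k.+1, m.+2 - k)) (Phi : {poly R}) : 'rV[R]_m.+2 :=
  (Blast A B an)^-1 *: Kn A an Phi.

(* Main.v *)
Require Import Defs.
From HB Require Import structures.
From mathcomp Require Import all_boot all_order all_algebra.
From mathcomp Require Import reals.
From mathcomp Require Import zify.
Import Order.TTheory GRing.Theory Num.Theory.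
Local Open Scope ring_scope.

Lemma castmx_mulL (R : nzRingType) k k' c d (e : k = k') (X : 'M[R]_(k,c)) (Y : 'M[R]_(c,d)) :
  castmx (e, erefl d) (X *m Y) = castmx (e, erefl c) X *m Y.
Proof. by case: k' / e; rewrite !castmx_id. Qed.

Lemma castmx_addL (R : nzRingType) k k' c (e : k = k') (X Y : 'M[R]_(k,c)) :
  castmx (e, erefl c) (X + Y) = castmx (e, erefl c) X + castmx (e, erefl c) Y.
Proof. by case: k' / e; rewrite !castmx_id. Qed.

Lemma hsum (R : comNzRingType) n (A : 'M[R]_n.+1) (p : {poly R}) :
  horner_mx A p = \sum_(i < size p) p`_i *: A ^+ i.
Proof.
rewrite -{1}[p]coefK poly_def linear_sum; apply: eq_bigr => i _.
by rewrite linearZ rmorphXn /= horner_mx_X.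
Qed.

Lemma size_sub_monic (R : nzRingType) (p q : {poly R}) k :
  p \is monic -> q \is monic -> size p = k.+1 -> size q = k.+1 ->
  (size (p - q)%R <= k)%N.
Proof.
move=> mp mq sp sq; apply/leq_sizeP => j; rewrite leq_eqVlt => /orP[/eqP<-|ltj].
  move/monicP: mp; move/monicP: mq; rewrite /lead_coef sp sq /= coefB => -> ->.
  by rewrite subrr.
rewrite coefB !nth_default ?subrr // ?sp ?sq //.
Qed.

Theorem mainTheorem14 (R : realType) (m : nat) (A : 'M[R]_m.+2) (B : 'cV[R]_m.+2)
  (an : forall k : nat, 'M[R]_(m.+2 - k.+1, m.+2 - k)) (Phi : {poly R}) :
  controllable A B ->
  (forall k : nat, (k < m.+1)%N -> row_free (an k)) ->
  (forall k : nat, (k < m.+1)%N -> an k *m Bk A B an k = 0) ->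
  Phi \is monic -> size Phi = m.+3 ->
  [/\ Bk A B an m.+1 = At A an m.+1 *m B,
      Blast A B an != 0
    & char_poly (A - B *m Kgain A B an Phi) = Phi].
Proof.
move=> ctrl rf hB mPhi sPhi.
have anv : forall i j, (j < i)%N -> (i <= m.+1)%N -> anprod an i *m (A ^+ j *m B) = 0.
  elim=> [//|i IH] j ltji lei /=.
  rewrite -mulmxA; move: ltji; rewrite ltnS leq_eqVlt => /orP[/eqP->|ltji].
    exact: hB.
  by rewrite IH ?mulmx0 // ltnW.
have rfP : forall i, (i <= m.+1)%N -> row_free (anprod an i).
  elim=> [_|i IH lei] /=.
    by rewrite castmx_id row_free_unit unitmx1.
  apply/inj_row_free => v; rewrite mulmxA => /eqP.
  rewrite mulmx_free_eq0; last exact: IH (ltnW lei).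
  by rewrite mulmx_free_eq0 ?(rf i lei) // => /eqP.
set e := last_rows_eq1 m.
set p : 'rV[R]_m.+2 := castmx (e, erefl m.+2) (anprod an m.+1).
have pv : forall j, (j < m.+1)%N -> p *m (A ^+ j *m B) = 0.
  move=> j lj; rewrite /p -castmx_mulL anv //.
  by apply/matrixP => i k; rewrite castmxE !mxE.
set b := (p *m (A ^+ m.+1 *m B)) 0 0.
have Bb : Blast A B an = b by rewrite /Blast /Bk castmx_mulL.
have bn0 : b != 0.
  apply/negP => /eqP b0.
  have pC : p *m ctrb_mx A B = 0.
    apply/matrixP => i j; rewrite ord1 !mxE.
    have -> : \sum_j0 p 0 j0 * ctrb_mx A B j0 j = (p *m (A ^+ j *m B)) 0 0.
      by rewrite !mxE; apply: eq_bigr => k _; rewrite !mxE.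
    have := ltn_ord j; rewrite ltnS leq_eqVlt => /orP[/eqP jE|lj].
      by rewrite -b0 /b; congr (_ 0 0); rewrite jE.
    by rewrite pv // mxE.
  have : row_free (ctrb_mx A B) by rewrite /row_free ctrl.
  move/(mulmx_free_eq0 p); rewrite pC eqxx => /esym/eqP p0.
  have := rfP m.+1 (leqnn _).
  have -> : anprod an m.+1 = castmx (esym e, erefl m.+2) p by rewrite /p castmx_comp castmx_id.
  by rewrite p0 /row_free /= castmx_const mxrank0 /= subSnn.
split; first by rewrite /Bk /At mulmxA.
  by rewrite Bb.
have KS : forall i, Kseq A an Phi i = anprod an i *m \sum_(j < i.+1) Phi`_j *: A ^+ j.
  elim=> [|i IH] /=.
    by rewrite !castmx_id big_ord1 expr0 mul1mx scalemx1.
  rewrite IH [in RHS]big_ord_recr /= mulmxDr !mulmxA scalemxAr /At /=.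
  by [].
set H := horner_mx A Phi.
have KnE : Kn A an Phi = p *m H.
  rewrite /Kn KS /At -mulmxA -mulmxDr castmx_mulL; congr (_ *m _).
  rewrite /H hsum sPhi [in RHS]big_ord_recr /=.
  have -> : Phi`_m.+2 = 1 by move/monicP: mPhi; rewrite /lead_coef sPhi.
  by rewrite scale1r [A ^+ m.+2]exprSr.
set q : 'rV[R]_m.+2 := b^-1 *: p.
have KgE : Kgain A B an Phi = q *m H by rewrite /Kgain KnE Bb /q scalemxAl.
rewrite KgE.
set Ac := A - B *m (q *m H).
have qv : forall j, (j < m.+1)%N -> q *m (A ^+ j *m B) = 0.
  by move=> j lj; rewrite /q -scalemxAl pv // scaler0.
have q1 : q *m (A ^+ m.+1 *m B) = 1%:M.
  apply/matrixP => i j; rewrite !ord1 /q -scalemxAl !mxE /= mulr1n.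
  by have := mulVf bn0; rewrite /b mxE.
clearbody q.
have L1 : forall j, (j <= m.+1)%N -> q *m Ac ^+ j = q *m A ^+ j.
  elim=> [|j IH] lj; first by rewrite !expr0.
  rewrite !exprSr -!mulmxE !mulmxA IH ?(ltnW lj) //.
  by rewrite /Ac mulmxBr !mulmxA -(mulmxA q (A ^+ j) B) qv // !mul0mx subr0.
have L1' : forall d : {poly R}, (size d <= m.+2)%N -> q *m horner_mx Ac d = q *m horner_mx A d.
  move=> d sd; rewrite !hsum !mulmx_sumr; apply: eq_bigr => i _.
  rewrite -!scalemxAr L1 //.
  by rewrite -ltnS (leq_trans (ltn_ord i) sd).
have sPX : (size (Phi - 'X^(m.+2))%R <= m.+2)%N.
  by apply: size_sub_monic => //; rewrite ?monicXn ?size_polyXn.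
have L2 : q *m horner_mx Ac Phi = 0.
  have -> : Phi = (Phi - 'X^(m.+2)) + 'X^(m.+2) by rewrite subrK.
  rewrite rmorphD mulmxDr L1' // rmorphB mulmxBr !rmorphXn /= !horner_mx_X.
  rewrite (exprSr Ac) -mulmxE (mulmxA q) L1 //.
  rewrite /Ac mulmxBr (mulmxA (q *m _) B) -(mulmxA q _ B) q1 mul1mx -/H -(mulmxA q _ A).
  have -> : A ^+ m.+1 *m A = A ^+ m.+2 by rewrite [A ^+ m.+2]exprSr.
  by rewrite addrA subrK subrr.
have L4 : forall d : {poly R}, (size d <= m.+2)%N -> q *m horner_mx A d = 0 -> d = 0.
  move=> d sd hd; apply/eqP; apply: contraT => dn0.
  have sdk : size d = (size d).-1.+1 by rewrite prednK // size_poly_gt0.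
  set k := (size d).-1 in sdk.
  have lk : (k <= m.+1)%N by rewrite -ltnS -sdk.
  have AE : forall a c, A ^+ a *m A ^+ c = A ^+ (a + c) by move=> a c; rewrite exprD.
  have E : q *m horner_mx A d *m (A ^+ (m.+1 - k) *m B) = (lead_coef d)%:M.
    rewrite hsum mulmx_sumr mulmx_suml sdk big_ord_recr /=.
    rewrite big1 ?add0r; last first.
      move=> i _; rewrite -scalemxAr -scalemxAl -mulmxA (mulmxA (A ^+ i)) AE qv ?scaler0 //.
      have := ltn_ord i; lia.
    rewrite -scalemxAr -scalemxAl -mulmxA (mulmxA (A ^+ k)) AE subnKC // q1.
    by rewrite scalemx1 /lead_coef sdk.
  rewrite hd mul0mx in E; move/matrixP: E => /(_ 0 0); rewrite !mxE /= mulr1n.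
  by move/esym/eqP; rewrite lead_coef_eq0 (negPf dn0).
apply/eqP; rewrite -subr_eq0; apply/eqP; apply: L4.
  by apply: size_sub_monic; rewrite ?char_poly_monic ?size_char_poly.
rewrite -L1'; last by apply: size_sub_monic; rewrite ?char_poly_monic ?size_char_poly.
by rewrite rmorphB /= Cayley_Hamilton mulmxBr L2 mulmx0 subr0.
Qed.
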